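(* Let $F,K\ge1$ and $0\le Z< F$ be integers. If there exists an $S$-PDA$(F,K,Z)$ with $|S|=\dfrac{K(F-Z)}{Z+1}$, then $K=\ell\binom{F}{Z}$ for some integer $\ell\ge1$.
   Context: A placement delivery array $S$-PDA$(F,K,Z)$ is an $F\times K$ array $R=(r_{j,k})$, $1\le j\le F$, $1\le k\le K$, over a finite set $S$ such that: (1) each cell is either empty or contains an element of $S$; (2) each column contains exactly $Z$ empty cells; (3) each element of $S$ occurs at most once in each row and at most once in each column; (4) if two distinct nonempty cells satisfy $r_{j_1,k_1}=r_{j_2,k_2}=t\in S$, then the cells $r_{j_1,k_2}$ and $r_{j_2,k_1}$ are empty. *)

(* Defs.v *)
From mathcomp Require Import all_boot.
Set Implicit Arguments. Unset Strict Implicit. Unset Printing Implicit Defensive.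

(* An F x K array over S: rows 'I_F, columns 'I_K; a cell is None (empty)
   or Some s with s in S. *)
Definition array (F K : nat) (S : finType) := 'I_F -> 'I_K -> option S.

Definition is_PDA (F K Z : nat) (S : finType) (R : array F K S) : Prop :=
  (forall k : 'I_K, #|[set j : 'I_F | R j k == None]| = Z) /\
  (forall (t : S) (j : 'I_F) (k1 k2 : 'I_K),
      R j k1 = Some t -> R j k2 = Some t -> k1 = k2) /\
  (forall (t : S) (j1 j2 : 'I_F) (k : 'I_K),
      R j1 k = Some t -> R j2 k = Some t -> j1 = j2) /\
  (forall (t : S) (j1 j2 : 'I_F) (k1 k2 : 'I_K),
      (j1, k1) <> (j2, k2) ->
      R j1 k1 = Some t -> R j2 k2 = Some t ->
      R j1 k2 = None /\ R j2 k1 = None).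

(* Main.v *)
Require Import Defs.
From mathcomp Require Import all_boot.
Set Implicit Arguments. Unset Strict Implicit. Unset Printing Implicit Defensive.

Lemma sumb (T : finType) (P : pred T) : \sum_i (P i : nat) = #|P|.
Proof. rewrite -sum1_card [in RHS]big_mkcond /=; apply: eq_bigr => i _. by rewrite unfold_in; case: (P i). Qed.

Section PDA.
Variables (F K Z : nat) (S : finType) (R : array F K S).
Hypothesis hE : forall k : 'I_K, #|[set j : 'I_F | R j k == None]| = Z.
Hypothesis hrow : forall (t : S) (j : 'I_F) (k1 k2 : 'I_K),
      R j k1 = Some t -> R j k2 = Some t -> k1 = k2.
Hypothesis h4 : forall (t : S) (j1 j2 : 'I_F) (k1 k2 : 'I_K),
      (j1, k1) <> (j2, k2) ->
      R j1 k1 = Some t -> R j2 k2 = Some t ->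
      R j1 k2 = None /\ R j2 k1 = None.
Hypothesis hS : #|S| * Z.+1 = K * (F - Z).

Definition E k := [set j : 'I_F | R j k == None].
Definition rows t := [set j : 'I_F | [exists k, R j k == Some t]].

Lemma rowsD t j0 k0 : R j0 k0 = Some t -> rows t :\ j0 \subset E k0.
Proof.
move=> H0; apply/subsetP=> j; rewrite !inE => /andP[nj /existsP[k /eqP Hk]].
have ne : (j,k) <> (j0,k0) by case=> e _; rewrite e eqxx in nj.
by case: (h4 ne Hk H0) => -> _.
Qed.

Lemma rows_le t : #|rows t| <= Z.+1.
Proof.
case: (set_0Vmem (rows t)) => [->|[j0 Hj0]]; first by rewrite cards0.
move: (Hj0); rewrite inE => /existsP[k0 /eqP H0].
rewrite (cardsD1 j0) Hj0 add1n ltnS -(hE k0).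
exact: subset_leq_card (rowsD H0).
Qed.

Lemma row_sum j : \sum_t (#|rows t| - #|rows t :\ j|) = \sum_k (R j k != None).
Proof.
transitivity (\sum_t \sum_k (R j k == Some t : nat)).
  apply: eq_bigr => t _; rewrite (cardsD1 j) addnK.
  rewrite inE; case: existsP => [[k0 /eqP Hk0]|nk].
    rewrite (bigD1 k0) ?Hk0 ?eqxx //= big1 // => k nk.
    by case: eqP => // Hk; rewrite (hrow Hk0 Hk) eqxx in nk.
  by rewrite big1 // => k _; case: eqP => // e; case: nk; exists k; rewrite e.
rewrite exchange_big; apply: eq_bigr => k _.
case e: (R j k) => [s|] /=.
  rewrite (bigD1 s) ?eqxx //= big1 // => t nt.
  by case: eqP => // [[]] st; rewrite st eqxx in nt.
by rewrite big1.
Qed.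

Lemma total : \sum_t #|rows t| = K * (F - Z).
Proof.
have -> : \sum_t #|rows t| = \sum_j \sum_k (R j k != None : nat).
  rewrite -(eq_bigr _ (fun j _ => row_sum j)) exchange_big.
  apply: eq_bigr => t _. 
  rewrite (eq_bigr (fun j => (j \in rows t : nat))); first by rewrite sumb.
  by move=> j _; rewrite (cardsD1 j) addnK.
rewrite exchange_big /= -[K in K * _]card_ord -sum_nat_const.
apply: eq_bigr => k _; rewrite sumb.
rewrite -(hE k) -[F in F - _]card_ord (cardsCs [set j | R j k == None]) card_ord.
rewrite subKn; last by rewrite -[X in _ <= X](card_ord F) max_card.
by apply: eq_card => j; rewrite !inE.
Qed.

Lemma rows_card t : #|rows t| = Z.+1.
Proof.
have H : \sum_t (Z.+1 - #|rows t|) = 0.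
  apply/eqP; rewrite -(eqn_add2r (\sum_t #|rows t|)) add0n -big_split /=.
  rewrite (eq_bigr (fun _ => Z.+1)); last by move=> i _; rewrite subnK ?rows_le.
  by rewrite sum_nat_const total -hS.
move/eqP: H; rewrite sum_nat_eq0 => /forallP/(_ t) /=; rewrite subn_eq0 => H.
by apply/eqP; rewrite eqn_leq rows_le H.
Qed.

Lemma E_eq t j0 k0 : R j0 k0 = Some t -> E k0 = rows t :\ j0.
Proof.
move=> H0; apply/eqP; rewrite eq_sym eqEcard rowsD //= /E hE.
have Hj : j0 \in rows t by rewrite inE; apply/existsP; exists k0; rewrite H0.
by move: (rows_card t); rewrite (cardsD1 j0) Hj add1n => [[->]].
Qed.

Definition N (A : {set 'I_F}) := #|[set k | E k == A]|.

Lemma swap (A : {set 'I_F}) (i j : 'I_F) : i \in A -> j \notin A -> N A <= N (j |: (A :\ i)).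
Proof.
move=> iA jA.
pose g k := if [pick k' | R i k' == R j k] is Some k' then k' else k.
have cl : forall k, E k = A -> R i (g k) = R j k /\ E (g k) = j |: (A :\ i).
  move=> k Ek.
  case e: (R j k) => [t|]; last by move: jA; rewrite -Ek inE e.
  have Ekt := E_eq e.
  have : i \in rows t by move: iA; rewrite -Ek Ekt inE => /andP[].
  rewrite inE => /existsP[k' /eqP Hk'].
  rewrite /g; case: pickP => [k'' /eqP Hk''| none]; last first.
    by move: (none k'); rewrite Hk' e eqxx.
  rewrite e in Hk''; split => //.
  rewrite (E_eq Hk''); apply/setP => x; rewrite !inE -Ek Ekt !inE.
  have jr : j \in rows t by rewrite inE; apply/existsP; exists k; rewrite e.
  have ij : i != j by apply: contraNneq jA => <-.
  rewrite inE in jr.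
  case: (x =P j) => [->|_] /=; first by rewrite eq_sym ij jr.
  by [].
rewrite /N -(card_in_imset (f := g)).
  apply: subset_leq_card; apply/subsetP => x /imsetP[k].
  by rewrite !inE => /eqP /cl [_ H] ->; rewrite H.
move=> k1 k2; rewrite !inE => /eqP Ek1 /eqP Ek2 e.
have [H1 _] := cl _ Ek1; have [H2 _] := cl _ Ek2.
have Hjj : R j k1 = R j k2 by rewrite -H1 -H2 e.
case e1: (R j k1) => [t|].
  exact: (hrow e1 (etrans (esym Hjj) e1)).
by move: jA; rewrite -Ek1 inE e1.
Qed.

Lemma const n : forall A B : {set 'I_F}, #|A| = Z -> #|B| = Z ->
  #|A :\: B| = n -> N A = N B.
Proof.
elim: n => [|n IH] A B cA cB cD.
  have sAB : A \subset B by rewrite -setD_eq0 -cards_eq0 cD.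
  have -> // : A = B by apply/eqP; rewrite eqEcard sAB cA cB /=.
have [i iD] : exists i, i \in A :\: B by apply/set0Pn; rewrite -card_gt0 cD.
have cD' : #|B :\: A| = n.+1 by rewrite cardsD setIC cB -cA -cardsD.
have [j jD] : exists j, j \in B :\: A by apply/set0Pn; rewrite -card_gt0 cD'.
move: (iD) (jD); rewrite !inE => /andP[iB iA] /andP[jA jB].
set A' := j |: (A :\ i).
have cA' : #|A'| = Z.
  by rewrite cardsU1 -cA (cardsD1 i A) iA !inE (negbTE jA) andbF.
have eqN : N A = N A'.
  apply/eqP; rewrite eqn_leq swap //=.
  have h := swap (A := A') (i := j) (j := i).
  have eA : i |: (A' :\ j) = A.
    apply/setP=> x; rewrite !inE.
    case: (x =P i) => [->|ni] /=; first by rewrite iA.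
    case: (x =P j) => [->|nj] /=; first by rewrite (negbTE jA).
    by [].
  rewrite -{1}eA; apply: h; first by rewrite !inE eqxx.
  rewrite !inE eqxx /= orbF.
  by apply/eqP => e; move: jB; rewrite -e (negbTE iB).
apply: etrans eqN (IH A' B cA' cB _).
have -> : A' :\: B = (A :\: B) :\ i.
  apply/setP=> x; rewrite !inE.
  case: (x =P i) => [->|ni] /=; first by rewrite orbF; apply/andP => [[_ /eqP e]]; move: jB; rewrite -e (negbTE iB).
  case: (x =P j) => [->|nj] /=; first by rewrite jB (negbTE jA).
  by [].
by move: cD; rewrite (cardsD1 i) iD add1n => [[]].
Qed.

End PDA.

Theorem mainTheorem6 (F K Z : nat) (S : finType) (R : array F K S) :
  1 <= F -> 1 <= K -> Z < F ->
  is_PDA Z R ->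
  #|S| * Z.+1 = K * (F - Z) ->
  exists l : nat, 1 <= l /\ K = l * 'C(F, Z).
Proof.
move=> F1 K1 ZF [hE [hrow [hcol h4]]] hS.
pose k0 := Ordinal K1.
pose c := N R (E R k0).
have Hc : forall A : {set 'I_F}, #|A| == Z -> N R A = c.
  move=> A /eqP cA; exact: (const hE hrow h4 hS cA (hE k0) (erefl _)).
have HK : K = 'C(F, Z) * c.
  rewrite -{1}(card_ord K) -sum1_card.
  rewrite (partition_big (E R) (fun A : {set 'I_F} => A \in [set A : {set 'I_F} | #|A| == Z])) /=; last first.
    by move=> k _; rewrite inE hE.
  rewrite (eq_bigr (fun _ => c)).
    by rewrite sum_nat_const card_draws card_ord.
  move=> X; rewrite inE => /Hc <-; rewrite sum1_card /N cardsE.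
  by [].
exists c; split; last by rewrite mulnC.
by rewrite lt0n; apply/eqP => c0; have := K1; rewrite HK c0 muln0.
Qed.
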